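(* Let $p$ be an odd prime, let $v$ be an integer with $1<v<p-1$, let $g\in\{2,\dots,p-1\}$ be a primitive root modulo $p$, let $t\ge1$ and $b\in\{0,\dots,v-1\}$. Let $$\rho(b,t)=\#\{i\in[1,p-1]:\ g^i\,\%\,p\not\equiv b,\ g^{i+t+1}\,\%\,p\not\equiv b,\ g^{i+j}\,\%\,p\equiv b\ (1\le j\le t)\},$$ all congruences modulo $v$. Write $p=q_t g^t+r_t$ and $p=q_{t+1}g^{t+1}+r_{t+1}$ with $0\le r_t<g^t$, $0\le r_{t+1}<g^{t+1}$. Then $$\left\lfloor\tfrac{g}{v}\right\rfloor^{t-1}\left\lfloor\tfrac{(v-1)g}{v}\right\rfloor\left\lfloor\tfrac{q_t}{v}\right\rfloor-\left\lceil\tfrac{g}{v}\right\rceil^{t}\left\lceil\tfrac{(v-1)g}{v}\right\rceil\left\lceil\tfrac{q_{t+1}+1}{v}\right\rceil\ \le\ \rho(b,t)\ \le\ \left\lceil\tfrac{g}{v}\right\rceil^{t-1}\left\lceil\tfrac{(v-1)g}{v}\right\rceil\left\lceil\tfrac{q_t+1}{v}\right\rceil-\left\lfloor\tfrac{g}{v}\right\rfloor^{t}\left\lfloor\tfrac{(v-1)g}{v}\right\rfloor\left\lfloor\tfrac{q_{t+1}}{v}\right\rfloor.$$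
   Context: $x\,\%\,p$ denotes the least nonnegative remainder of the integer $x$ modulo $p$. $\rho(b,t)$ counts runs of length exactly $t$ of symbol $b$ in the periodic sequence $((g^i\,\%\,p)\,\%\,v)_i$. *)

(* Defs.v *)
From mathcomp Require Import all_boot all_order all_algebra.
Set Implicit Arguments. Unset Strict Implicit. Unset Printing Implicit Defensive.

Definition primitive_root_mod (p g : nat) : bool :=
  (g ^ (p.-1) %% p == 1 %% p) &&
  [forall k : 'I_(p.-1), (0 < k) ==> (g ^ k %% p != 1 %% p)].

Definition ceildiv (a d : nat) : nat := (a + d.-1) %/ d.

Definition rho (p g v b t : nat) : nat :=
  count (fun i => [&& (g ^ i %% p) %% v != b,
                      (g ^ (i + t + 1) %% p) %% v != b &
                      all (fun j => (g ^ (i + j) %% p) %% v == b) (iota 1 t)])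
        (iota 1 p.-1).

(* Main.v *)
Require Import Defs.
From mathcomp Require Import all_boot all_order all_algebra.
From mathcomp Require Import zify.
Import GRing.Theory Num.Theory.


Lemma count_shift (P : pred nat) v a :
  (forall x, P (x + v) = P x) -> count P (iota a v) = count P (iota 0 v).
Proof.
case: v => [//|v] Pp; elim: a => [//|a IH]; rewrite -IH.
have -> : iota a.+1 v.+1 = iota a.+1 v ++ [:: a + v.+1].
  rewrite -(addn1 v) iotaD /=; congr (_ ++ [:: _]); lia.
by rewrite count_cat /= addn0 Pp addnC.
Qed.

Lemma count_blocks (P : pred nat) v a k :
  (forall x, P (x + v) = P x) ->
  count P (iota a (k * v)) = k * count P (iota 0 v).
Proof.
move=> Pp; elim: k a => [//|k IH] a.
by rewrite mulSn iotaD count_cat IH (@count_shift P v a Pp) mulSn.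
Qed.

Lemma count_partial (P : pred nat) v a s :
  (forall x, P (x + v) = P x) -> s <= v ->
  count P (iota a s) <= count P (iota 0 v).
Proof.
move=> Pp sv.
rewrite -(@count_shift P v a Pp).
rewrite -(subnKC sv) iotaD count_cat; exact: leq_addr.
Qed.

Lemma count_periodic (P : pred nat) v a n : 0 < v ->
  (forall x, P (x + v) = P x) ->
  n %/ v * count P (iota 0 v) <= count P (iota a n) <= (n + v.-1) %/ v * count P (iota 0 v).
Proof.
move=> v0 Pp.
have En := divn_eq n v.
have hs := @count_partial P v (a + n %/ v * v) _ Pp (ltnW (ltn_pmod n v0)).
have -> : count P (iota a n) = n %/ v * count P (iota 0 v) + count P (iota (a + n %/ v * v) (n %% v)).
  by rewrite {1}En iotaD count_cat count_blocks.
apply/andP; split; first exact: leq_addr.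
have -> : (n + v.-1) %/ v = n %/ v + (n %% v + v.-1) %/ v.
  by rewrite {1}En -addnA divnMDl.
rewrite mulnDl leq_add2l.
case: (posnP (n %% v)) => [h|h].
  by rewrite h /= add0n divn_small ?prednK // ?(leq_pred); move: hs; rewrite h.
apply: leq_trans hs _.
have : 0 < (n %% v + v.-1) %/ v by rewrite divn_gt0 //; lia.
case: ((n %% v + v.-1) %/ v) => // k _; exact: leq_pmull.
Qed.

Lemma perm_iota_map (f : nat -> nat) v :
  {in iota 0 v &, injective f} -> (forall x, x < v -> f x < v) ->
  perm_eq (map f (iota 0 v)) (iota 0 v).
Proof.
move=> fi fr.
have u1 : uniq (map f (iota 0 v)) by rewrite map_inj_in_uniq ?iota_uniq.
have sub : {subset map f (iota 0 v) <= iota 0 v}.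
  by move=> y /mapP [x]; rewrite !mem_iota /= !add0n => /fr ? ->.
have [_ eqs] := uniq_min_size u1 sub (eq_leq (esym (size_map f _))).
have u2 := iota_uniq 0 v.
exact: uniq_perm.
Qed.

Lemma count_preim1 (f : nat -> nat) v y :
  {in iota 0 v &, injective f} -> (forall x, x < v -> f x < v) -> y < v ->
  count (fun x => f x == y) (iota 0 v) = 1.
Proof.
move=> fi fr yv.
have := count_map f (pred1 y) (iota 0 v).
rewrite ((permP (@perm_iota_map f v fi fr)) (pred1 y)) count_uniq_mem ?iota_uniq //.
by rewrite mem_iota /= add0n yv => <-.
Qed.

Lemma count_map_perm (f : nat -> nat) v (Q : pred nat) :
  {in iota 0 v &, injective f} -> (forall x, x < v -> f x < v) ->
  count (fun x => Q (f x)) (iota 0 v) = count Q (iota 0 v).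
Proof.
move=> fi fr.
have := count_map f Q (iota 0 v).
by rewrite ((permP (@perm_iota_map f v fi fr)) Q) => <-.
Qed.


Lemma count_sum (T : Type) (a : pred T) (s : seq T) :
  count a s = \sum_(x <- s) (a x : nat).
Proof. by elim: s => [|x s IH]; rewrite ?big_nil ?big_cons //= IH. Qed.

Lemma sum_shift (F : nat -> nat) v a :
  (forall x, F (x + v) = F x) ->
  \sum_(x <- iota a v) F x = \sum_(x <- iota 0 v) F x.
Proof.
case: v => [//|v] Pp; elim: a => [//|a IH]; rewrite -IH.
have -> : iota a.+1 v.+1 = iota a.+1 v ++ [:: a + v.+1].
  rewrite -(addn1 v) iotaD /=; congr (_ ++ [:: _]); lia.
by rewrite big_cat big_cons big_nil /= addn0 Pp big_cons addnC.
Qed.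

Lemma sum_blocks (F : nat -> nat) v k :
  (forall x, F (x + v) = F x) ->
  \sum_(x <- iota 0 (k * v)) F x = k * \sum_(x <- iota 0 v) F x.
Proof.
move=> Pp; suff : forall a, \sum_(x <- iota a (k * v)) F x = k * \sum_(x <- iota 0 v) F x by [].
elim: k => [|k IH] a; first by rewrite big_nil.
by rewrite mulSn iotaD big_cat IH (@sum_shift F v a Pp) mulSn.
Qed.

Lemma exchange_count (Q : nat -> nat -> bool) n m :
  \sum_(d <- iota 0 n) count (Q d) (iota 0 m) =
  \sum_(r <- iota 0 m) count (fun d => Q d r) (iota 0 n).
Proof.
under eq_bigr do rewrite count_sum.
rewrite exchange_big /=.
by apply: eq_bigr => r _; rewrite count_sum.
Qed.

Definition Dp (p v g b e : nat) : bool := (b + p * e) %% v == (g * b) %% v.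
Definition Rr (p v g b d r : nat) : bool :=
  (r != b) && ((g * r) %% v == (b + p * d) %% v).
Definition Nr (p v g b d : nat) : nat :=
  count (fun r => (g * r) %% v == (b + p * d) %% v) (iota 0 v).
Definition rhoR (p v g b d : nat) : nat := count (Rr p v g b d) (iota 0 v).

Lemma affine_inj p v b : coprime p v ->
  {in iota 0 v &, injective (fun e => (b + p * e) %% v)}.
Proof.
move=> cop x y; rewrite !mem_iota /= !add0n => xv yv /eqP.
rewrite eqn_modDl => h.
wlog le : x y xv yv h / x <= y.
  move=> W; case: (leqP x y) => [l|l]; first exact: W.
  by apply/esym/W => //; [rewrite eq_sym | exact: ltnW].
move: h; rewrite eq_sym eqn_mod_dvd; last by rewrite leq_mul2l le orbT.
rewrite -mulnBr Gauss_dvdr; last by rewrite coprime_sym.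
move=> dv.
case: (posnP (y - x)) => [h0|h0]; first by lia.
have := dvdn_leq h0 dv; lia.
Qed.

Lemma modn_addmul m k v : (m + k * v) %% v = m %% v.
Proof. by rewrite addnC modnMDl. Qed.

Lemma Dp_periodic p v g b e : Dp p v g b (e + v) = Dp p v g b e.
Proof. by rewrite /Dp mulnDr addnA modn_addmul. Qed.

Lemma affine_count1 p v b y : coprime p v -> 0 < v ->
  count (fun e => (b + p * e) %% v == y %% v) (iota 0 v) = 1.
Proof.
move=> cop v0.
apply: (@count_preim1 (fun e => (b + p * e) %% v) v (y %% v)).
- exact: affine_inj.
- by move=> x _; rewrite ltn_pmod.
- by rewrite ltn_pmod.
Qed.

Lemma Dp_count1 p v g b : coprime p v -> 0 < v ->
  count (Dp p v g b) (iota 0 v) = 1.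
Proof. exact: affine_count1. Qed.

Lemma Nr_periodic_v p v g b d : Nr p v g b (d + v) = Nr p v g b d.
Proof. by rewrite /Nr mulnDr addnA modn_addmul. Qed.

Lemma shift_inj v p : {in iota 0 v &, injective (fun r => (r + p) %% v)}.
Proof.
move=> x y; rewrite !mem_iota /= !add0n => xv yv /eqP.
by rewrite eqn_modDr !modn_small // => /eqP.
Qed.

Lemma Nr_periodic_g p v g b d : 0 < v -> Nr p v g b (d + g) = Nr p v g b d.
Proof.
move=> v0; rewrite /Nr.
rewrite -(@count_map_perm (fun r => (r + p) %% v) v _ (@shift_inj v p)); last first.
  by move=> x _; rewrite ltn_pmod.
apply: eq_count => r /=.
rewrite modnMmr mulnDr mulnDr addnA [p * g]mulnC.
by rewrite eqn_modDr.
Qed.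

Lemma sum_Nr_v p v g b : coprime p v -> 0 < v ->
  \sum_(d <- iota 0 v) Nr p v g b d = v.
Proof.
move=> cop v0; rewrite /Nr exchange_count.
rewrite (eq_bigr (fun _ => 1)); last first.
  move=> r _; rewrite -(@affine_count1 p v b (g * r) cop v0).
  by apply: eq_count => d; rewrite eq_sym.
by rewrite sum1_count count_predT size_iota.
Qed.

Lemma sum_Nr_g p v g b : coprime p v -> 0 < v -> 0 < g ->
  \sum_(d <- iota 0 g) Nr p v g b d = g.
Proof.
move=> cop v0 g0.
have h1 := @sum_blocks (Nr p v g b) g v (fun d => @Nr_periodic_g p v g b d v0).
have h2 := @sum_blocks (Nr p v g b) v g (fun d => @Nr_periodic_v p v g b d).
rewrite (@sum_Nr_v p v g b cop v0) [in X in X = _]mulnC h1 in h2.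
by apply/eqP; rewrite -(eqn_pmul2l v0) h2 mulnC.
Qed.

Lemma count_split_pred (T : Type) (a c : pred T) s :
  count (fun x => ~~ a x && c x) s + count (fun x => a x && c x) s = count c s.
Proof.
elim: s => [//|x s IH] /=.
by case: (a x); case: (c x) => /=; rewrite -IH; lia.
Qed.

Lemma rhoR_Nr p v g b d : b < v ->
  rhoR p v g b d + Dp p v g b d = Nr p v g b d.
Proof.
move=> bv; rewrite /rhoR /Nr.
rewrite -(@count_split_pred _ (fun r => r == b) (fun r => (g * r) %% v == (b + p * d) %% v)).
have -> : count (fun x => (x == b) && ((g * x) %% v == (b + p * d) %% v)) (iota 0 v)
   = Dp p v g b d.
  rewrite (@eq_count _ _ (fun r => Dp p v g b d && (r == b))); last first.
    by move=> r /=; case: eqP => [->|_]; rewrite ?andbF // andbT /Dp eq_sym.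
  case: (Dp p v g b d) => /=.
    by rewrite count_uniq_mem ?iota_uniq // mem_iota /= add0n bv.
  by rewrite count_pred0.
by [].
Qed.


Lemma sum_rhoR p v g b : coprime p v -> 0 < v -> 0 < g -> b < v ->
  \sum_(d <- iota 0 g) rhoR p v g b d + count (Dp p v g b) (iota 0 g) = g.
Proof.
move=> cop v0 g0 bv.
rewrite count_sum -big_split /=.
rewrite -[RHS](@sum_Nr_g p v g b cop v0 g0).
by apply: eq_bigr => d _; rewrite rhoR_Nr.
Qed.


Lemma floor_ceil_vm1 g v : 0 < v ->
  ((v - 1) * g) %/ v + ceildiv g v = g /\ ceildiv ((v - 1) * g) v + g %/ v = g.
Proof.
case: v => [//|v] _.
rewrite /ceildiv /= subn1 /=.
have Eg := divn_eq g v.+1.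
have sl := ltn_pmod g (ltn0Sn v).
move: (g %/ v.+1) (g %% v.+1) Eg sl => a s Eg sl.
case: (posnP s) => [s0|s0].
  have E1 : v * g = (v * a) * v.+1 + 0 by rewrite Eg s0; nia.
  have E2 : g + v = a * v.+1 + v by rewrite Eg s0 addn0.
  have E3 : v * g + v = (v * a) * v.+1 + v by rewrite E1 addn0.
  rewrite E3 E1 E2 !divnMDl // !divn_small //; lia.
case: s s0 Eg sl => [//|s'] _ Eg sl.
have E1 : v * g = (v * a + s') * v.+1 + (v - s') by rewrite Eg; nia.
have E2 : g + v = (a + 1) * v.+1 + s' by rewrite Eg; nia.
have E3 : v * g + v = (v * a + s' + 1) * v.+1 + (v - s' - 1) by rewrite Eg; nia.
rewrite E3 E1 E2 !divnMDl // !divn_small //; lia.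
Qed.


Fixpoint okk (p v g b k m : nat) : bool :=
  if k is k'.+1 then Dp p v g b (m %% g) && okk p v g b k' (m %/ g) else true.

Definition Nt (p v g b t x : nat) : bool :=
  (x %% v != b) && all (fun j => ((g ^ j * x) %% p) %% v == b) (iota 1 t).

Lemma step_eq p v g b y : b < v ->
  (((g * y) %% p) %% v == b) = ((g * y) %% v == (b + p * (g * y %/ p)) %% v).
Proof.
move=> bv.
have E := divn_eq (g * y) p.
move: (g * y %/ p) (g * y %% p) E => m r ->.
by rewrite addnC [m * p]mulnC eqn_modDr (modn_small bv).
Qed.

Lemma key_digit p v g b k x : 0 < p -> 0 < g -> b < v ->
  Nt p v g b k.+1 x =
  okk p v g b k (g ^ k.+1 * x %/ p) && Rr p v g b (g ^ k.+1 * x %/ p %/ g ^ k) (x %% v).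
Proof.
move=> p0 g0 bv.
elim: k => [|k IH].
  rewrite /Nt /Rr /= expn1 divn1 andbT; congr (_ && _).
  by rewrite step_eq // modnMmr.
have Eall : Nt p v g b k.+2 x =
   Nt p v g b k.+1 x && (((g ^ k.+2 * x) %% p) %% v == b).
  rewrite /Nt -(addn1 k.+1) iotaD all_cat /= andbT andbA.
  by rewrite addn1 add1n.
rewrite Eall IH.
set m1 := g ^ k.+1 * x %/ p.
set y := (g ^ k.+1 * x) %% p.
have Ex : g ^ k.+2 * x = g * m1 * p + g * y.
  by rewrite expnS -mulnA {1}(divn_eq (g ^ k.+1 * x) p) mulnDr mulnA.
have yp : y < p by rewrite ltn_pmod.
have el : g * y %/ p < g by rewrite ltn_divLR // ltn_mul2l g0.
have Em2 : g ^ k.+2 * x %/ p = g * m1 + g * y %/ p by rewrite Ex divnMDl.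
have Emod : g ^ k.+2 * x %/ p %% g = g * y %/ p.
  by rewrite Em2 [g * m1]mulnC modnMDl modn_small.
have Ediv : g ^ k.+2 * x %/ p %/ g = m1.
  by rewrite Em2 [g * m1]mulnC divnMDl // divn_small // addn0.
have Edk : g ^ k.+2 * x %/ p %/ g ^ k.+1 = m1 %/ g ^ k.
  by rewrite (expnS g k) divnMA Ediv.
rewrite /= Emod Ediv Edk.
have EE : (g ^ k.+2 * x) %% p = (g * y) %% p.
  by rewrite /y modnMmr expnS mulnA.
rewrite EE.
case H : (okk p v g b k m1 && Rr p v g b (m1 %/ g ^ k) (x %% v)).
  have : Nt p v g b k.+1 x by rewrite IH.
  rewrite /Nt => /andP [_ /allP /(_ k.+1)].
  rewrite mem_iota leqnn /= => /(_ isT) /eqP yb.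
  change (y %% v = b) in yb.
  rewrite -andbA H andbT step_eq // -modnMmr yb /Dp eq_sym.
  by [].
by rewrite -andbA H andbF.
Qed.


Definition lo (p G m : nat) : nat := (m * p + G.-1) %/ G.

Lemma lo0 p G : 0 < G -> lo p G 0 = 0.
Proof. by move=> G0; rewrite /lo mul0n add0n divn_small // prednK. Qed.

Lemma loG p G : 0 < G -> lo p G G = p.
Proof.
by move=> G0; rewrite /lo mulnC divnMDl // divn_small ?addn0 // prednK.
Qed.

Lemma lo_step p G m : 0 < G ->
  lo p G m + p %/ G <= lo p G m.+1 <= lo p G m + p %/ G + 1.
Proof.
move=> G0; rewrite /lo.
set A := m * p + G.-1.
have -> : m.+1 * p + G.-1 = p %/ G * G + (A + p %% G).
  rewrite /A mulSn {1}(divn_eq p G); lia.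
rewrite divnMDl //.
have f1 : A %/ G <= (A + p %% G) %/ G by apply: leq_div2r; exact: leq_addr.
have : A + p %% G <= A + 1 * G by rewrite leq_add2l mul1n ltnW // ltn_pmod.
move/(leq_div2r G); rewrite divnDMl // => f2.
lia.
Qed.

Lemma lo_fiber p G m x : 0 < G -> 0 < p ->
  lo p G m <= x < lo p G m.+1 -> G * x %/ p = m.
Proof.
move=> G0 p0 /andP [h1 h2].
have a1 : m * p <= G * x.
  move: h1; rewrite /lo -ltnS ltn_divLR //; lia.
have a2 : G * x < m.+1 * p.
  move: h2; rewrite /lo leq_divRL //; lia.
apply/eqP; rewrite eqn_leq; apply/andP; split.
  by rewrite -ltnS ltn_divLR.
by rewrite leq_divRL.
Qed.

Lemma lo_mono p G m : 0 < G -> lo p G m <= lo p G m.+1.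
Proof. by move=> G0; have /andP [h _] := @lo_step p G m G0; exact: leq_trans (leq_addr _ _) h. Qed.

Lemma sum_decomp (F : nat -> nat) p G n : 0 < G ->
  \sum_(x <- iota 0 (lo p G n)) F x =
  \sum_(m <- iota 0 n) \sum_(x <- iota (lo p G m) (lo p G m.+1 - lo p G m)) F x.
Proof.
move=> G0; elim: n => [|n IH]; first by rewrite lo0 // !big_nil.
rewrite -(addn1 n) iotaD big_cat /= big_cons big_nil addn0 add0n -IH addn1.
rewrite -big_cat -iotaD subnKC //; exact: lo_mono.
Qed.

Lemma sum_split_mul (F : nat -> nat) n H :
  \sum_(m <- iota 0 (n * H)) F m =
  \sum_(d <- iota 0 n) \sum_(m' <- iota 0 H) F (d * H + m').
Proof.
elim: n => [|n IH]; first by rewrite !big_nil.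
rewrite mulSnr iotaD big_cat IH -(addn1 n) iotaD big_cat /= big_cons big_nil addn0.
congr (_ + _); rewrite add0n.
by rewrite -[n * H]addn0 iotaDl big_map addn0.
Qed.


Lemma okk_high p v g b k d m : 0 < g ->
  okk p v g b k (d * g ^ k + m) = okk p v g b k m.
Proof.
move=> g0; elim: k d m => [//|k IH] d m /=.
have -> : d * g ^ k.+1 + m = (d * g ^ k) * g + m by rewrite expnSr mulnA.
by rewrite modnMDl divnMDl // IH.
Qed.

Lemma okk_low p v g b k d e : 0 < g -> e < g ->
  okk p v g b k.+1 (d * g + e) = Dp p v g b e && okk p v g b k d.
Proof.
move=> g0 eg /=.
by rewrite modnMDl modn_small // divnMDl // divn_small // addn0.
Qed.

Definition Kc p v g b k := \sum_(m <- iota 0 (g ^ k)) (okk p v g b k m : nat).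

Lemma Kc_S p v g b k : 0 < g ->
  Kc p v g b k.+1 = Kc p v g b k * count (Dp p v g b) (iota 0 g).
Proof.
move=> g0; rewrite /Kc expnSr sum_split_mul big_distrl /=.
apply: eq_big_seq => d _.
rewrite count_sum big_distrr /=.
apply: eq_big_seq => e; rewrite mem_iota /= add0n => eg.
by rewrite modnMDl modn_small // divnMDl // divn_small // addn0 mulnC; case: (Dp _ _ _ _ e); case: (okk _ _ _ _ _ d).
Qed.

Lemma Kc_bounds p v g b k : 0 < g -> 0 < v -> coprime p v ->
  (g %/ v) ^ k <= Kc p v g b k <= (ceildiv g v) ^ k.
Proof.
move=> g0 v0 cop.
have hc := @count_periodic (Dp p v g b) v 0 g v0 (@Dp_periodic p v g b).
rewrite Dp_count1 // !muln1 in hc.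
move/andP: hc => [c1 c2].
elim: k => [|k IH].
  by rewrite /Kc !expn0 /= big_cons big_nil.
move/andP: IH => [i1 i2].
rewrite Kc_S // !expnSr; apply/andP; split; apply: leq_mul => //.
Qed.


Lemma fiber_count p v g b d a n : 0 < v ->
  n %/ v * rhoR p v g b d <= count (fun x => Rr p v g b d (x %% v)) (iota a n)
  <= (n + v.-1) %/ v * rhoR p v g b d.
Proof.
move=> v0.
have := @count_periodic (fun x => Rr p v g b d (x %% v)) v a n v0.
have -> : count (fun x => Rr p v g b d (x %% v)) (iota 0 v) = rhoR p v g b d.
  rewrite /rhoR; apply: eq_in_count => x; rewrite mem_iota /= add0n => xv.
  by rewrite modn_small.
apply => x /=; by rewrite modnDr.
Qed.

Lemma T_eq p v g b k : 0 < g ->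
  \sum_(m <- iota 0 (g ^ k.+1)) okk p v g b k m * rhoR p v g b (m %/ g ^ k)
  = (\sum_(d <- iota 0 g) rhoR p v g b d) * Kc p v g b k.
Proof.
move=> g0; rewrite expnS sum_split_mul big_distrl /=.
apply: eq_big_seq => d _.
rewrite /Kc big_distrr /=.
apply: eq_big_seq => m; rewrite mem_iota /= add0n => mk.
rewrite okk_high // divnMDl ?expn_gt0 ?g0 // divn_small // addn0 mulnC.
by [].
Qed.

Lemma N_bounds p v g b k : 0 < p -> coprime p v -> 0 < g -> 1 < v -> b < v ->
  (g %/ v) ^ k * (((v - 1) * g) %/ v) * ((p %/ g ^ k.+1) %/ v)
  <= count (Nt p v g b k.+1) (iota 0 p)
  <= (ceildiv g v) ^ k * ceildiv ((v - 1) * g) v * ceildiv (p %/ g ^ k.+1).+1 v.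
Proof.
move=> p0 cop g0 v1 bv.
have v0 : 0 < v by lia.
set G := g ^ k.+1.
have G0 : 0 < G by rewrite expn_gt0 g0.
set q := p %/ G.
set T := \sum_(m <- iota 0 G) okk p v g b k m * rhoR p v g b (m %/ g ^ k).
have EN : count (Nt p v g b k.+1) (iota 0 p) =
  \sum_(m <- iota 0 G) okk p v g b k m *
     count (fun x => Rr p v g b (m %/ g ^ k) (x %% v)) (iota (lo p G m) (lo p G m.+1 - lo p G m)).
  rewrite count_sum -{1}(@loG p G G0) sum_decomp //.
  apply: eq_big_seq => m _.
  rewrite count_sum big_distrr /=.
  apply: eq_big_seq => x; rewrite mem_iota => hx.
  have hx' : lo p G m <= x < lo p G m.+1.
    move/andP: hx => [h1 h2]; rewrite h1 /=.
    by move: h2; rewrite subnKC // lo_mono.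
  rewrite key_digit // (@lo_fiber p G m x G0 p0 hx').
  by case: (okk _ _ _ _ _ _); case: (Rr _ _ _ _ _ _).
have Lo : q %/ v * T <= count (Nt p v g b k.+1) (iota 0 p).
  rewrite EN /T big_distrr /=; apply: leq_sum => m _.
  rewrite mulnCA; apply: leq_mul => //.
  have /andP [c1 _] := @fiber_count p v g b (m %/ g ^ k) (lo p G m) (lo p G m.+1 - lo p G m) v0.
  apply: leq_trans c1; apply: leq_mul => //; apply: leq_div2r.
  have /andP [s1 _] := @lo_step p G m G0; lia.
have Up : count (Nt p v g b k.+1) (iota 0 p) <= ceildiv q.+1 v * T.
  rewrite EN /T big_distrr /=; apply: leq_sum => m _.
  rewrite [ceildiv _ _ * _]mulnCA; apply: leq_mul => //.
  have /andP [_ c2] := @fiber_count p v g b (m %/ g ^ k) (lo p G m) (lo p G m.+1 - lo p G m) v0.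
  apply: leq_trans c2 _; apply: leq_mul => //; rewrite /ceildiv; apply: leq_div2r.
  have /andP [_ s2] := @lo_step p G m G0; lia.
have ET : T = (\sum_(d <- iota 0 g) rhoR p v g b d) * Kc p v g b k by rewrite /T T_eq.
have hS := @sum_rhoR p v g b cop v0 g0 bv.
have hc := @count_periodic (Dp p v g b) v 0 g v0 (@Dp_periodic p v g b).
rewrite Dp_count1 // !muln1 in hc.
have [fc1 fc2] := @floor_ceil_vm1 g v v0.
have hK := @Kc_bounds p v g b k g0 v0 cop.
move/andP: hc => [d1 d2]; move/andP: hK => [k1 k2].
set S := \sum_(d <- iota 0 g) rhoR p v g b d in hS ET.
have Slo : ((v - 1) * g) %/ v <= S.
  move: d1 d2 fc1 fc2 hS; rewrite /ceildiv.
  move: (count _ _) ((g + v.-1) %/ v) (((v - 1) * g) %/ v) ((((v - 1) * g) + v.-1) %/ v) (g %/ v) => c A B C D.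
  clear; lia.
have Sup : S <= ceildiv ((v - 1) * g) v.
  move: d1 d2 fc1 fc2 hS; rewrite /ceildiv.
  move: (count _ _) ((g + v.-1) %/ v) (((v - 1) * g) %/ v) ((((v - 1) * g) + v.-1) %/ v) (g %/ v) => c A B C D.
  clear; lia.
apply/andP; split.
  apply: leq_trans Lo; rewrite ET [q %/ v * _]mulnC [S * _]mulnC.
  by apply: leq_mul => //; apply: leq_mul.
apply: leq_trans Up _; rewrite ET [ceildiv _ _ * _]mulnC [S * _]mulnC.
by apply: leq_mul => //; apply: leq_mul.
Qed.


Lemma modpow p g i j : (g ^ j * (g ^ i %% p)) %% p = g ^ (i + j) %% p.
Proof. by rewrite modnMmr -expnD addnC. Qed.

Lemma Nt_S p v g b t x :
  Nt p v g b t.+1 x = Nt p v g b t x && (((g ^ t.+1 * x) %% p) %% v == b).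
Proof. by rewrite /Nt -(addn1 t) iotaD all_cat /= andbT andbA add1n addn1. Qed.

Lemma perm_pow p g : prime p -> 0 < g < p -> primitive_root_mod p g ->
  perm_eq (map (fun i => g ^ i %% p) (iota 1 p.-1)) (iota 1 p.-1).
Proof.
move=> pp /andP [g0 gp] /andP [_ /forallP prim].
have p1 := prime_gt1 pp.
have cop : forall i, coprime p (g ^ i).
  by move=> i; apply: coprimeXr; rewrite prime_coprime // gtnNdvd.
have inj : {in iota 1 p.-1 &, injective (fun i => g ^ i %% p)}.
  suff W : forall i j, 1 <= i -> j < p -> i < j -> g ^ i %% p = g ^ j %% p -> False.
    move=> i j; rewrite !mem_iota => /andP [i1 i2] /andP [j1 j2] e.
    case: (ltngtP i j) => // h.
      by case: (W i j) => //; lia.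
    by case: (W j i) => //; lia.
  move=> i j i1 jp ij e.
  have ek : g ^ (j - i) %% p = 1 %% p.
    move: e; have -> : j = i + (j - i) by lia.
    move: (j - i) => d e.
    have gd : 0 < g ^ d by rewrite expn_gt0 g0.
    have e2 : g ^ i * g ^ d = g ^ i * 1 %[mod p] by rewrite muln1 -expnD e.
    move/eqP: e2; rewrite eqn_mod_dvd; last first.
      by rewrite leq_mul2l gd orbT.
    rewrite -mulnBr Gauss_dvdr; last exact: cop.
    by rewrite addKn -eqn_mod_dvd // => /eqP.
  have hk : j - i < p.-1 by lia.
  have := prim (Ordinal hk); rewrite /= subn_gt0 ij /= ek eqxx //.
have u1 : uniq (map (fun i => g ^ i %% p) (iota 1 p.-1)) by rewrite map_inj_in_uniq ?iota_uniq.
have sub : {subset map (fun i => g ^ i %% p) (iota 1 p.-1) <= iota 1 p.-1}.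
  move=> y /mapP [i _ ->]; rewrite mem_iota.
  have : 0 < g ^ i %% p.
    rewrite lt0n; apply/negP => /eqP h.
    have : p %| g ^ i by rewrite /dvdn h.
    by rewrite Euclid_dvdX // gtnNdvd.
  have := ltn_pmod (g ^ i) (ltnW p1); lia.
have [_ eqs] := uniq_min_size u1 sub (eq_leq (esym (size_map _ _))).
have u2 := iota_uniq 1 p.-1.
exact: uniq_perm.
Qed.

Lemma rho_diff p v g b t : prime p -> 0 < g < p -> primitive_root_mod p g -> 0 < t ->
  rho p g v b t + count (Nt p v g b t.+1) (iota 0 p) = count (Nt p v g b t) (iota 0 p).
Proof.
move=> pp gr prim t0.
have p0 := prime_gt0 pp.
set P' := fun x => ~~ (((g ^ t.+1 * x) %% p) %% v == b) && Nt p v g b t x.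
have E1 : rho p g v b t = count P' (iota 1 p.-1).
  rewrite /rho -((permP (@perm_pow p g pp gr prim)) P') count_map.
  apply: eq_count => i /=.
  rewrite /P' /Nt /= modpow -addnA addn1.
  have -> : all (fun j => ((g ^ j * (g ^ i %% p)) %% p) %% v == b) (iota 1 t)
          = all (fun j => (g ^ (i + j) %% p) %% v == b) (iota 1 t).
    by apply: eq_all => j; rewrite modpow.
  by case: (_ %% v != b); case: (_ %% v != b); case: all.
have E2 : count P' (iota 1 p.-1) = count P' (iota 0 p).
  rewrite -{2}(prednK p0) /= /P' /Nt.
  case: t t0 {P' E1} => [//|t] _ /=.
  by rewrite !muln0 !mod0n; case: eqP.
rewrite E1 E2 -(@count_split_pred _ (fun x => ((g ^ t.+1 * x) %% p) %% v == b) (Nt p v g b t)).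
congr (_ + _); apply: eq_count => x; by rewrite Nt_S andbC.
Qed.

Local Open Scope ring_scope.

Theorem corollary8 (p v g t b : nat) :
  prime p -> odd p ->
  (1 < v)%N -> (v < p.-1)%N ->
  (2 <= g)%N -> (g <= p.-1)%N -> primitive_root_mod p g ->
  (1 <= t)%N -> (b < v)%N ->
  let qt := (p %/ g ^ t)%N in
  let qt1 := (p %/ g ^ t.+1)%N in
  (((g %/ v) ^ t.-1 * (((v - 1) * g) %/ v) * (qt %/ v))%N%:Z
     - ((ceildiv g v) ^ t * ceildiv ((v - 1) * g) v * ceildiv qt1.+1 v)%N%:Z
   <= (rho p g v b t)%:Z)
  /\
  ((rho p g v b t)%:Z
   <= ((ceildiv g v) ^ t.-1 * ceildiv ((v - 1) * g) v * ceildiv qt.+1 v)%N%:Z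
      - ((g %/ v) ^ t * (((v - 1) * g) %/ v) * (qt1 %/ v))%N%:Z).
Proof.
move=> pp _ v1 vp g2 gp prim t1 bv; cbv zeta.
have p0 := prime_gt0 pp.
have gr : (0 < g < p)%N by apply/andP; split; lia.
have cop : coprime p v by rewrite prime_coprime // gtnNdvd //; lia.
have g0 : (0 < g)%N by lia.
have hd := @rho_diff p v g b t pp gr prim t1.
case: t t1 hd => [//|k] _ hd.
have h1 := @N_bounds p v g b k p0 cop g0 v1 bv.
have h2 := @N_bounds p v g b k.+1 p0 cop g0 v1 bv.
rewrite /=.
move: h1 h2 hd.
move: (count _ (iota 0 p)) (count (Nt p v g b k.+2) _) (rho p g v b k.+1) => N1 N2 r.
move: ((g %/ v) ^ k * (((v - 1) * g) %/ v) * ((p %/ g ^ k.+1) %/ v))%N => a1.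
move: (ceildiv g v ^ k * ceildiv ((v - 1) * g) v * ceildiv (p %/ g ^ k.+1).+1 v)%N => b1.
move: ((g %/ v) ^ k.+1 * (((v - 1) * g) %/ v) * ((p %/ g ^ k.+2) %/ v))%N => a2.
move: (ceildiv g v ^ k.+1 * ceildiv ((v - 1) * g) v * ceildiv (p %/ g ^ k.+2).+1 v)%N => b2.
move=> /andP [x1 x2] /andP [y1 y2] e.
split; lia.
Qed.
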